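(* Let $(V,c)$ be a network satisfying the Yang-type inequality with constant $C_{YT}$. Let $\Omega\subset V$ be finite with Dirichlet eigenvalues $\lambda_1\le\cdots\le\lambda_{|\Omega|}$. If $\lambda_k\le1+C_{YT}$ for some $1\le k<|\Omega|$, then $$\sum_{i=1}^k\frac{\lambda_i-\lambda_{\min}}{\lambda_{k+1}-\lambda_i}\ge\frac1{C_{YT}}\sum_{i=1}^k(1-\lambda_i).$$
   Context: A network is a pair $(V,c)$ with $V$ countable and $c:V\times V\to[0,\infty)$ symmetric with $\pi(x)=\sum_yc(x,y)<\infty$; $P(x,y)=c(x,y)/\pi(x)$ and $\Delta f(x)=\sum_yP(x,y)(f(x)-f(y))$, a bounded self-adjoint operator on $L^2(V,\pi)$ (inner product $\sum_x\pi(x)f(x)\overline{g(x)}$) with spectrum in $[0,2]$; $\lambda_{\min}$ is the bottom of its spectrum. For finite $\Omega\subset V$, the Dirichlet eigenvalues $\lambda_1\le\cdots\le\lambda_{|\Omega|}$ of $\Omega$ are the eigenvalues (with multiplicity) of the compression $\Delta_\Omega f=\mathbf 1_\Omega\cdot\Delta f$ on functions vanishing outside $\Omega$. The network satisfies the Yang-type inequality with constant $C_{YT}$ if for every finite $\Omega\subset V$ and every $k<|\Omega|$: $\sum_{i=1}^k(\lambda_{k+1}-\lambda_i)^2(1-\lambda_i)\le C_{YT}\sum_{i=1}^k(\lambda_{k+1}-\lambda_i)(\lambda_i-\lambda_{\min})$. *)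

(* Defs.v *)
From HB Require Import structures.
From mathcomp Require Import all_boot all_order all_algebra.
From mathcomp Require Import all_classical all_reals all_analysis.
Set Implicit Arguments. Unset Strict Implicit. Unset Printing Implicit Defensive.
Import Order.TTheory GRing.Theory Num.Theory.
Local Open Scope classical_set_scope.
Local Open Scope ring_scope.

Section Network.
Variables (R : realType) (V : countType).

Definition sumV (f : V -> R) : R :=
  fine (\esum_(y in [set: V]) (Num.max (f y) 0)%:E) -
  fine (\esum_(y in [set: V]) (Num.max (- f y) 0)%:E).

Variable c : V -> V -> R.

Definition pi (x : V) : R := fine (\esum_(y in [set: V]) (c x y)%:E).

(* (V,c) is a network: c >= 0, symmetric, pi(x) finite (and > 0, so that
   P(x,y) = c(x,y)/pi(x) makes sense). *)
Definition is_network : Prop :=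
  [/\ forall x y, 0 <= c x y,
      forall x y, c x y = c y x,
      forall x, (\esum_(y in [set: V]) (c x y)%:E < +oo)%E
    & forall x, 0 < pi x].

Definition P (x y : V) : R := c x y / pi x.

Definition Lap (f : V -> R) (x : V) : R := sumV (fun y => P x y * (f x - f y)).

Definition l2 (f : V -> R) : Prop :=
  (\esum_(x in [set: V]) (pi x * f x ^+ 2)%:E < +oo)%E.

(* l is in the spectrum of Delta on L^2(V,pi): Delta - l is not a bijection
   of L^2(V,pi) onto itself (the inverse is then automatically bounded). *)
Definition in_spectrum (l : R) : Prop :=
  ~ (forall g, l2 g -> exists! f, l2 f /\ (forall x, Lap f x - l * f x = g x)).

Definition lambda_min : R := inf [set l | in_spectrum l].

(* Dirichlet Laplacian of a finite set Omega = image of an injective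
   enumeration w : 'I_n -> V, written in the basis of indicator functions:
   entry (i,j) = (Delta 1_{w j})(w i)  (i.e. 1_Omega * Delta restricted). *)
Definition dir_mx (n : nat) (w : 'I_n -> V) : 'M[R]_n :=
  \matrix_(i, j) Lap (fun y => (y == w j)%:R) (w i).

Definition dirichlet_eigs (n : nat) (w : 'I_n -> V) (lam : seq R) : Prop :=
  sorted <=%R lam /\ char_poly (dir_mx w) = \prod_(l <- lam) ('X - l%:P).

(* Yang-type inequality with constant C (0-indexed: lam`_i = lambda_{i+1}) *)
Definition yang_type (C : R) : Prop :=
  forall (n : nat) (w : 'I_n -> V), injective w ->
  forall lam : seq R, dirichlet_eigs w lam ->
  forall k : nat, (k < n)%N ->
    \sum_(i < k) (lam`_k - lam`_i) ^+ 2 * (1 - lam`_i)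
      <= C * \sum_(i < k) (lam`_k - lam`_i) * (lam`_i - lambda_min).

End Network.

(* Main.v *)
Require Import Defs.
From HB Require Import structures.
From mathcomp Require Import all_boot all_order all_algebra.
From mathcomp Require Import all_classical all_reals all_analysis.
From mathcomp Require Import ring lra.
Import Order.TTheory GRing.Theory Num.Theory.
Local Open Scope ring_scope.

Lemma cheb (R : realFieldType) (k : nat) (f g : 'I_k -> R) :
  (forall i j, (f i - f j) * (g i - g j) <= 0) ->
  k%:R * \sum_(i < k) f i * g i <= (\sum_(i < k) f i) * (\sum_(i < k) g i).
Proof.
move=> H.
have E : \sum_(i < k) \sum_(j < k) (f i - f j) * (g i - g j) =
  2 * (k%:R * \sum_(i < k) f i * g i - (\sum_(i < k) f i) * (\sum_(i < k) g i)).
  have E1 : forall i, \sum_(j < k) (f i - f j) * (g i - g j) =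
     k%:R * (f i * g i) - f i * (\sum_j g j) - g i * (\sum_j f j)
     + \sum_j f j * g j.
    move=> i.
    have -> : \sum_(j < k) (f i - f j) * (g i - g j) =
      \sum_(j < k) (f i * g i - f i * g j - g i * f j + f j * g j).
      by apply: eq_bigr => j _; ring.
    rewrite !big_split /= !sumrN sumr_const card_ord -!mulr_sumr.
    by rewrite mulr_natl.
  rewrite (eq_bigr _ (fun i _ => E1 i)) !big_split /= !sumrN sumr_const card_ord.
  rewrite -!mulr_suml -?mulr_sumr -mulr_natl; ring.
have : \sum_(i < k) \sum_(j < k) (f i - f j) * (g i - g j) <= 0.
  by apply: sumr_le0 => i _; apply: sumr_le0 => j _; apply: H.
rewrite E => h; lra.
Qed.

Theorem corollary5p3 (R : realType) (V : countType) (c : V -> V -> R) (C : R) :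
  is_network c -> yang_type c C -> 0 < C ->
  forall (n : nat) (w : 'I_n -> V), injective w ->
  forall lam : seq R, dirichlet_eigs c w lam ->
  forall k : nat, (1 <= k)%N -> (k < n)%N ->
  lam`_k.-1 <= 1 + C ->
  lam`_k.-1 < lam`_k ->
  \sum_(i < k) (lam`_i - lambda_min c) / (lam`_k - lam`_i)
    >= C^-1 * \sum_(i < k) (1 - lam`_i).
Proof.
move=> _ HY C0 n w winj lam Hd k k1 kn Hk Hlt.
have Y := HY n w winj lam Hd k kn.
set l0 := lambda_min c in Y *.
set L := lam`_k in Y Hlt *.
have Hsz : (k < size lam)%N.
  case: Hd => _ Hc.
  have := congr1 (fun p : {poly R} => size p) Hc; rewrite /=; rewrite size_char_poly size_prod_XsubC => -[<-] //.
have Hle : forall i : 'I_k, lam`_i <= lam`_k.-1.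
  move=> i; case: Hd => Hs _.
  apply: (sorted_leq_nth le_trans lexx 0 Hs) => //=.
  - exact: ltn_trans (ltn_ord i) Hsz.
  - by apply: leq_ltn_trans Hsz; rewrite leq_pred.
  - by rewrite -ltnS prednK.
pose a i := L - lam`_i.
pose e i := C * (lam`_i - l0) - a i * (1 - lam`_i).
have apos : forall i : 'I_k, 0 < a i.
  by move=> i; rewrite /a subr_gt0; apply: le_lt_trans (Hle i) Hlt.
have He : forall i j : 'I_k, (a i - a j) * (e i - e j) <= 0.
  move=> i j; have := Hle i; have := Hle j; rewrite /e /a => hj hi.
  have -> : (L - lam`_i - (L - lam`_j)) * (C * (lam`_i - l0) - (L - lam`_i) * (1 - lam`_i) -
     (C * (lam`_j - l0) - (L - lam`_j) * (1 - lam`_j))) =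
     - ((lam`_i - lam`_j) ^+ 2 * (C + L + 1 - lam`_i - lam`_j)) by ring.
  rewrite oppr_le0; apply: mulr_ge0; first exact: sqr_ge0.
  lra.
have S1 := @cheb R k (fun i : 'I_k => a i) (fun i : 'I_k => e i) He.
have Sa : 0 < \sum_(i < k) a i.
  rewrite (bigD1 (Ordinal k1)) //=; apply: ltr_pwDl; first exact: (apos (Ordinal k1)).
  by apply: sumr_ge0 => i _; apply/ltW/apos.
have Sae : 0 <= \sum_(i < k) a i * e i.
  have -> : \sum_(i < k) a i * e i =
    C * \sum_(i < k) (L - lam`_i) * (lam`_i - l0) - \sum_(i < k) (L - lam`_i) ^+ 2 * (1 - lam`_i).
    rewrite mulr_sumr -sumrB; apply: eq_bigr => i _; rewrite /e /a; ring.
  by rewrite subr_ge0.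
have Se : 0 <= \sum_(i < k) e i.
  have hk : 0 < k%:R :> R by rewrite ltr0n.
  rewrite -(pmulr_rge0 _ Sa); apply: le_trans S1.
  by apply: mulr_ge0 => //; apply: ltW.
have He2 : forall i j : 'I_k, (- (a i)^-1 - - (a j)^-1) * (e i - e j) <= 0.
  move=> i j.
  have -> : - (a i)^-1 - - (a j)^-1 = (a i - a j) / (a i * a j).
    have := apos i; have := apos j => hj hi.
    field; apply/andP; split; by rewrite gt_eqF.
  rewrite mulrAC; apply: mulr_le0_ge0; first exact: He.
  by rewrite invr_ge0; apply: mulr_ge0; apply: ltW.
have S2 := @cheb R k (fun i : 'I_k => - (a i)^-1) (fun i : 'I_k => e i) He2.
have Sinv : \sum_(i < k) - (a i)^-1 <= 0.
  by apply: sumr_le0 => i _; rewrite oppr_le0 invr_ge0; apply/ltW.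
have Sfin : 0 <= \sum_(i < k) e i / a i.
  have hk : 0 < k%:R :> R by rewrite ltr0n.
  have : k%:R * \sum_(i < k) - (a i)^-1 * e i <= 0.
    apply: le_trans S2 _; exact: mulr_le0_ge0.
  rewrite pmulr_rle0 // => h.
  have -> : \sum_(i < k) e i / a i = - \sum_(i < k) - (a i)^-1 * e i.
    rewrite -sumrN; apply: eq_bigr => i _; rewrite mulrC; ring.
  by rewrite oppr_ge0.
have Eq : \sum_(i < k) e i / a i =
   C * \sum_(i < k) (lam`_i - l0) / (L - lam`_i) - \sum_(i < k) (1 - lam`_i).
  rewrite mulr_sumr -sumrB; apply: eq_bigr => i _; rewrite /e.
  have := apos i; rewrite /a => hi; field; by rewrite gt_eqF.
rewrite Eq subr_ge0 in Sfin.
rewrite ler_pdivrMl //.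
Qed.
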